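(* For any two groups of agents with additive utilities, with $n=n_1+n_2$ agents in total, there exists an allocation that is EF$(n-1)$ for every agent.
   Context: There is a finite set $G$ of goods and two groups $A_1,A_2$ with $n_1,n_2\ge1$ agents. Each agent has an additive utility $u_a(X)=\sum_{g\in X}u_a(\{g\})\ge0$. An allocation is a partition $(G_1,G_2)$ of $G$; agents of $A_i$ get $u_a(G_i)$. For integer $c\ge0$, the allocation is EF$c$ for $a\in A_i$ if there is $C\subseteq G_{3-i}$ with $|C|\le c$ and $u_a(G_i)\ge u_a(G_{3-i}\setminus C)$. *)

(* Defs.v *)
From HB Require Import structures.
From mathcomp Require Import all_boot all_order all_algebra.
Set Implicit Arguments. Unset Strict Implicit. Unset Printing Implicit Defensive.
Import Order.TTheory GRing.Theory Num.Theory.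
Local Open Scope ring_scope.

Definition util (R : numDomainType) (G : finType) (v : G -> R) (X : {set G}) : R :=
  \sum_(g in X) v g.

Definition EFc (R : numDomainType) (G : finType) (c : nat) (v : G -> R)
    (Own Oth : {set G}) : Prop :=
  exists C : {set G}, [/\ C \subset Oth, (#|C| <= c)%N &
                         util v (Oth :\: C) <= util v Own].

(* Main.v *)
Require Import Defs.
From HB Require Import structures.
From mathcomp Require Import all_boot all_order all_algebra.
From mathcomp Require Import ring lra.
Set Implicit Arguments. Unset Strict Implicit. Unset Printing Implicit Defensive.
Import Order.TTheory GRing.Theory Num.Theory.
Local Open Scope ring_scope.

Section K.
Variables (R : realFieldType) (G : finType).

Definition lin (w x : G -> R) := \sum_g w g * x g.

Lemma lin_delta (v : G -> R) g0 k :
  \sum_g v g * ((g == g0)%:R * k) = v g0 * k.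
Proof.
rewrite (bigD1 g0) //= eqxx mul1r big1 ?addr0 // => g /negbTE ->.
by rewrite mul0r mulr0.
Qed.

Lemma kernel (ws : seq (G -> R)) (F : {set G}) :
  (size ws < #|F|)%N ->
  exists d : G -> R, [/\ forall g, g \notin F -> d g = 0,
     (exists g, d g != 0) & forall w, List.In w ws -> lin w d = 0].
Proof.
move Hn: (size ws) => n; elim: n ws Hn F => [|n IH] [|w ws] //= Hn F hF.
  have [g0 g0F] : exists g0, g0 \in F by apply/card_gt0P.
  exists (fun g => (g == g0)%:R); split.
  - by move=> g gF; case: eqP => // e; rewrite e g0F in gF.
  - by exists g0; rewrite eqxx oner_eq0.
  - by [].
case: Hn => Hn.
case: (boolP [exists g0 in F, w g0 != 0]) => [/exists_inP [g0 g0F wg0]|hw].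
  set c := w g0.
  pose ws' := map (fun v : G -> R => fun g => v g - v g0 * w g / c) ws.
  have hF' : (n < #|F :\ g0|)%N.
    move: hF; rewrite (cardsD1 g0 F) g0F add1n.
    by rewrite ltnS.
  have [d' [d'F [g1 g1n] d'0]] := IH ws' ltac:(by rewrite size_map) _ hF'.
  pose k := lin w d' / c.
  exists (fun g => d' g - (g == g0)%:R * k); split.
  - move=> g gF; rewrite d'F; last by rewrite inE (negbTE gF) andbF.
    case: eqP => [e|_]; last by rewrite mul0r subr0.
    by rewrite e g0F in gF.
  - exists g1; have : g1 \in F :\ g0.
      by case: (boolP (g1 \in F :\ g0)) => // h; rewrite d'F ?eqxx in g1n.
    by rewrite !inE => /andP [/negbTE -> _]; rewrite mul0r subr0.
  - have key : forall v : G -> R, lin v (fun g => d' g - (g == g0)%:R * k)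
                = lin v d' - v g0 * k.
      move=> v; rewrite /lin -lin_delta -sumrB; apply: eq_bigr => g _.
      by rewrite mulrBr.
    move=> v [<-|vin].
      rewrite key /k /c mulrC -mulrA mulVf ?mulr1 ?subrr //.
    pose f := fun v : G -> R => fun g => v g - v g0 * w g / c.
    have H := d'0 _ (List.in_map f _ _ vin).
    rewrite key -H /lin /f /k /lin.
    rewrite mulr_suml mulr_sumr -sumrB; apply: eq_bigr => g _.
    ring.
  have hw0 : forall g, g \in F -> w g = 0.
    move=> g gF; apply/eqP; move/exists_inPn: hw => /(_ g gF).
    by rewrite negbK.
  have [d [dF dn d0]] := IH ws Hn F (ltnW hF).
  exists d; split => // v [<-|vin]; last exact: d0.
  rewrite /lin big1 // => g _.
  case: (boolP (g \in F)) => gF; first by rewrite hw0 // mul0r.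
  by rewrite dF // mulr0.
Qed.

Definition frac (x : G -> R) := [set g | 0 < x g < 1].

Lemma lin_lin w x d t : lin w (fun g => x g + t * d g) = lin w x + t * lin w d.
Proof.
rewrite /lin mulr_sumr -big_split; apply: eq_bigr => g _ /=. ring.
Qed.

Lemma reduce (ws : seq (G -> R)) (x : G -> R) :
  (forall g, 0 <= x g <= 1) ->
  exists y : G -> R, [/\ forall g, 0 <= y g <= 1,
     forall w, List.In w ws -> lin w y = lin w x &
     (#|frac y| <= size ws)%N].
Proof.
move: (leqnn #|frac x|); move: {2}#|frac x| => k.
elim: k x => [|k IH] x Hk hx.
  by exists x; split => //; apply: leq_trans Hk _.
case: (leqP #|frac x| (size ws)) => hle; first by exists x.
have [d [dF [g1 g1n] d0]] := kernel hle.
pose S := [set g | d g != 0].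
have g1S : g1 \in S by rewrite inE.
have SF : forall g, d g != 0 -> 0 < x g < 1.
  move=> g; apply: contraR => h; rewrite dF ?eqxx //.
  by rewrite inE.
pose r g := if 0 < d g then (1 - x g) / d g else x g / (- d g).
have [gs gsS gmin] := @arg_minP _ _ _ g1 (mem S) r g1S.
set t := r gs.
have gsd : d gs != 0 by have : gs \in S := gsS; rewrite inE.
have tle : forall g, g \in S -> t <= r g by move=> g gS; apply: gmin.
have tpos : 0 < t.
  rewrite /t /r; have /andP [h0 h1] := SF gs gsd.
  case: ifP => hd.
    by apply: divr_gt0 => //; rewrite subr_gt0.
  apply: divr_gt0 => //; rewrite oppr_gt0 lt_neqAle gsd /=.
  by rewrite leNgt hd.
pose y := fun g => x g + t * d g.
have hy : forall g, 0 <= y g <= 1.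
  move=> g; rewrite /y; case: (boolP (d g != 0)) => hd; last first.
    by move: hd; rewrite negbK => /eqP ->; rewrite mulr0 addr0.
  have gS : g \in S by rewrite inE.
  have := tle g gS; have := SF g hd => /andP [h0 h1]; rewrite /r.
  case: ifP => dp.
    rewrite ler_pdivlMr // => htd.
    have : 0 <= t * d g by apply: mulr_ge0; [apply: ltW|apply: ltW].
    move=> ? ; apply/andP; split; lra.
  have dn : 0 < - d g by rewrite oppr_gt0 lt_neqAle hd /= leNgt dp.
  rewrite ler_pdivlMr // => htd.
  have : 0 <= t * - d g by apply: mulr_ge0; [apply: ltW|apply: ltW].
  move=> ?; apply/andP; split; nra.
have sub : frac y \proper frac x.
  apply/properP; split.
    apply/subsetP => g; rewrite !inE /y.
    case: (boolP (d g != 0)) => hd; first by rewrite SF.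
    by move: hd; rewrite negbK => /eqP ->; rewrite mulr0 addr0.
  exists gs; first by rewrite inE; apply: SF.
  rewrite inE /y negb_and -!leNgt.
  rewrite /t /r.
  case: ifP => dp.
    by rewrite divfK // subrKC lexx orbT.
  have dn : - d gs != 0 by rewrite oppr_eq0.
  have e : x gs / - d gs * d gs = - x gs by field.
  by rewrite e subrr lexx.
have Hk' : (#|frac y| <= k)%N.
  by rewrite -ltnS; apply: leq_trans Hk; apply: proper_card.
have [z [hz zl zc]] := IH y Hk' hy.
exists z; split => // w win.
by rewrite zl // /y lin_lin d0 // mulr0 addr0.
Qed.


Lemma utilE (v : G -> R) (X : {set G}) :
  util v X = \sum_g (if g \in X then v g else 0).
Proof. by rewrite /util big_mkcond. Qed.

Lemma balanced (v y : G -> R) (hv : forall g, 0 <= v g)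
  (hy : forall g, 0 <= y g <= 1) (hl : lin v y = (\sum_g v g) / 2) :
  util v (~: [set g | 1 <= 2 * y g] :\: (~: [set g | 1 <= 2 * y g] :&: frac y))
    <= util v [set g | 1 <= 2 * y g] /\
  util v ([set g | 1 <= 2 * y g] :\: ([set g | 1 <= 2 * y g] :&: frac y))
    <= util v (~: [set g | 1 <= 2 * y g]).
Proof.
have key : \sum_g v g * (2 * y g - 1) = 0.
  have -> : \sum_g v g * (2 * y g - 1) = 2 * lin v y - \sum_g v g.
    rewrite /lin mulr_sumr -sumrB; apply: eq_bigr => g _; ring.
  by rewrite hl; field.
have key2 : \sum_g v g * (1 - 2 * y g) = 0.
  have -> : \sum_g v g * (1 - 2 * y g) = - \sum_g v g * (2 * y g - 1).
    by rewrite -sumrN; apply: eq_bigr => g _; ring.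
  by rewrite key oppr0.
split; rewrite -subr_ge0 !utilE -sumrB.
  rewrite -[X in X <= _]key; apply: ler_sum => g _.
  rewrite !inE; have /andP [y0 y1] := hy g; have vg := hv g;
  case: (leP 1 (2 * y g)) => h1; case: (ltP 0 (y g)) => h2;
  case: (ltP (y g) 1) => h3 /=; nra.
rewrite -[X in X <= _]key2; apply: ler_sum => g _.
rewrite !inE; have /andP [y0 y1] := hy g; have vg := hv g;
case: (leP 1 (2 * y g)) => h1; case: (ltP 0 (y g)) => h2;
case: (ltP (y g) 1) => h3 /=; nra.
Qed.

End K.

Lemma memIn (T : eqType) (x : T) (s : seq T) : x \in s -> List.In x s.
Proof.
elim: s => //= a s IH; rewrite inE => /orP [/eqP ->|/IH]; by [left|right].
Qed.

Lemma inMap (T : eqType) (U : Type) (f : T -> U) (x : T) (s : seq T) :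
  x \in s -> List.In (f x) (map f s).
Proof.
elim: s => //= a s IH; rewrite inE => /orP [/eqP ->|/IH]; by [left|right].
Qed.

Theorem mainTheorem13 (R : realFieldType) (G A1 A2 : finType)
    (u1 : A1 -> G -> R) (u2 : A2 -> G -> R)
    (hn1 : (1 <= #|A1|)%N) (hn2 : (1 <= #|A2|)%N)
    (hu1 : forall a g, 0 <= u1 a g) (hu2 : forall a g, 0 <= u2 a g) :
  exists G1 : {set G},
    (forall a : A1, EFc (#|A1| + #|A2| - 1)%N (u1 a) G1 (~: G1)) /\
    (forall a : A2, EFc (#|A1| + #|A2| - 1)%N (u2 a) (~: G1) G1).
Proof.
have [b _] : exists b : A2, b \in A2 by apply/card_gt0P.
pose ws := [seq u1 a | a <- enum A1] ++ [seq u2 a | a <- enum (predC1 b)].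
have hsize : (size ws <= #|A1| + #|A2| - 1)%N.
  rewrite size_cat !size_map -!cardE cardC1.
  rewrite -enumT -cardT; move: hn2; case: #|A2| => // m _; rewrite addnS subn1 /=; done.
pose x0 := fun _ : G => (2 : R)^-1.
have hx0 : forall g, 0 <= x0 g <= 1.
  by move=> g; rewrite /x0 invr_ge0 ler0n /= invf_le1 ?ler1n // ltr0n.
have [y [hy yl yc]] := reduce ws hx0.
have bal : forall v, List.In v ws -> (forall g, 0 <= v g) ->
    lin v y = (\sum_g v g) / 2.
  by move=> v vin _; rewrite yl // /lin /x0 mulr_suml.
set P := [set g | 1 <= 2 * y g].
set F := frac y.
have cF : forall X : {set G}, (#|X :&: F| <= #|A1| + #|A2| - 1)%N.
  move=> X; apply: leq_trans hsize; apply: leq_trans yc.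
  by apply: subset_leq_card; apply: subsetIr.
have in1 : forall a, List.In (u1 a) ws.
  move=> a; apply: List.in_or_app; left; apply: inMap.
  by rewrite mem_enum.
have in2 : forall a, a != b -> List.In (u2 a) ws.
  move=> a ab; apply: List.in_or_app; right; apply: inMap.
  by rewrite mem_enum.
have B1 := fun a => balanced (hu1 a) hy (bal _ (in1 a) (hu1 a)).
have B2 := fun a ab => balanced (hu2 a) hy (bal _ (in2 a ab) (hu2 a)).
case: (leP (util (u2 b) (~: P)) (util (u2 b) P)) => hb.
  exists (~: P); rewrite setCK; split.
    move=> a; exists (P :&: F); split => //; first exact: subsetIl.
    by case: (B1 a).
  move=> a; case: (eqVneq a b) => [->|ab].
    by exists set0; split => //; [apply: sub0set|rewrite cards0|rewrite setD0].
  exists (~: P :&: F); split => //; first exact: subsetIl.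
  by case: (B2 a ab).
exists P; split.
  move=> a; exists (~: P :&: F); split => //; first exact: subsetIl.
  by case: (B1 a).
move=> a; case: (eqVneq a b) => [->|ab].
  exists set0; split => //; [apply: sub0set|by rewrite cards0|rewrite setD0].
  exact: ltW.
exists (P :&: F); split => //; first exact: subsetIl.
by case: (B2 a ab).
Qed.
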